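(* Let $\Gamma$ be a weighted digraph with vertex set $\{1,\dots,n\}$, $n>1$, without loops and with strictly positive arc weights, let $L$ be its Laplacian matrix, $d$ its in-forest dimension, and $\tilde J=\sigma_{n-d}^{-1}Q_{n-d}$ its normalized matrix of maximum in-forests. Then: (i) $L+\tilde J^{*}$ is nonsingular; (ii) $\operatorname{rank}L=n-\operatorname{rank}\tilde J=n-d$; (iii) $\mathcal N(L)=\mathcal R(\tilde J)$ and $\mathcal R(L)=\mathcal N(\tilde J)$; (iv) $\mathcal R(L)\cap\mathcal R(\tilde J)=\{\mathbf 0\}$; (v) $\operatorname{ind}L=1$; (vi) $\tilde J$ is the eigenprojection of $L$.
   Context: $W=(w_{ij})$ is the matrix of arc weights ($w_{ij}>0$ iff there is an arc $i\to j$, else $0$). The Laplacian $L=(\ell_{ij})$: $\ell_{ij}=-w_{ij}$ for $j\ne i$, $\ell_{ii}=\sum_{k\ne i}w_{ik}$. The weight of a subgraph is the product of its arc weights (1 if no arcs); the weight of a set of subgraphs is the sum of their weights. A converging tree is a weakly connected digraph with one vertex (the root) of outdegree 0 and all others of outdegree 1; an in-forest is a spanning subgraph of $\Gamma$ whose weak components are converging trees. The in-forest dimension $d$ is the minimal number of trees in an in-forest of $\Gamma$ (so in-forests have at most $n-d$ arcs). $\sigma_k$ is the total weight of in-forests with $k$ arcs; $Q_k=(q^k_{ij})$ with $q^k_{ij}$ the total weight of in-forests with $k$ arcs in which $i$ lies in a tree rooted at $j$. $A^*$ is the conjugate transpose, $\mathcal R(A)$ the range and $\mathcal N(A)$ the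 null space of $A$. The index $\operatorname{ind}A$ of a square matrix is the least $k\ge0$ with $\operatorname{rank}A^{k+1}=\operatorname{rank}A^k$. The eigenprojection of $A$ is the idempotent matrix $B$ with $\mathcal R(B)=\mathcal N(A^\nu)$ and $\mathcal N(B)=\mathcal R(A^\nu)$, where $\nu=\operatorname{ind}A$. *)

(* Defs.v *)
From HB Require Import structures.
From mathcomp Require Import all_boot all_order all_algebra.
Set Implicit Arguments. Unset Strict Implicit. Unset Printing Implicit Defensive.
Import Order.TTheory GRing.Theory Num.Theory.
Local Open Scope ring_scope.

Section Digraph.
Variables (R : realFieldType) (n : nat) (w : 'M[R]_n).

Definition laplacian : 'M[R]_n :=
  \matrix_(i, j) if i == j then \sum_(k | k != i) w i k else - w i j.

(* A spanning subgraph is given by its set of arcs (i, j), i.e. i -> j. *)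
Definition is_subgraph (F : {set 'I_n * 'I_n}) : bool :=
  [forall a in F, 0 < w a.1 a.2].

Definition outdeg (F : {set 'I_n * 'I_n}) (i : 'I_n) : nat :=
  #|[set j | (i, j) \in F]|.

Definition weak_rel (F : {set 'I_n * 'I_n}) : rel 'I_n :=
  fun x y => ((x, y) \in F) || ((y, x) \in F).

Definition wcomp (F : {set 'I_n * 'I_n}) (x : 'I_n) : {set 'I_n} :=
  [set y | connect (weak_rel F) x y].

Definition conv_tree (F : {set 'I_n * 'I_n}) (C : {set 'I_n}) : bool :=
  [exists r in C, (outdeg F r == 0)%N &&
     [forall y in C, (y != r) ==> (outdeg F y == 1)%N]].

Definition is_inforest (F : {set 'I_n * 'I_n}) : bool :=
  is_subgraph F && [forall x, conv_tree F (wcomp F x)].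

Definition ntrees (F : {set 'I_n * 'I_n}) : nat :=
  #|[set wcomp F x | x : 'I_n]|.

Definition inforest_dim : nat :=
  \big[minn/n]_(F : {set 'I_n * 'I_n} | is_inforest F) ntrees F.

Definition weight (F : {set 'I_n * 'I_n}) : R := \prod_(a in F) w a.1 a.2.

Definition sigma (k : nat) : R :=
  \sum_(F : {set 'I_n * 'I_n} | is_inforest F && (#|F| == k)%N) weight F.

Definition rooted_at (F : {set 'I_n * 'I_n}) (i j : 'I_n) : bool :=
  (j \in wcomp F i) && (outdeg F j == 0)%N.

Definition Qmat (k : nat) : 'M[R]_n :=
  \matrix_(i, j) \sum_(F : {set 'I_n * 'I_n} |
                     [&& is_inforest F, #|F| == k & rooted_at F i j]) weight F.

Definition Jtilde : 'M[R]_n :=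
  (sigma (n - inforest_dim))^-1 *: Qmat (n - inforest_dim).

End Digraph.

(* Range (column space) and null space of a square matrix, as MathComp
   row-space matrices: R(A) is spanned by the rows of A^T, and
   N(A) = { x | A x = 0 } corresponds to kermx A^T (u *m A^T = 0). *)
Definition range {R : fieldType} {n : nat} (A : 'M[R]_n) : 'M[R]_n := A^T.
Definition nullsp {R : fieldType} {n : nat} (A : 'M[R]_n) : 'M[R]_n := kermx A^T.

Definition is_index {R : fieldType} {n : nat} (A : 'M[R]_n) (k : nat) : Prop :=
  \rank (A ^+ k.+1) = \rank (A ^+ k) /\
  forall j, (j < k)%N -> \rank (A ^+ j.+1) <> \rank (A ^+ j).

Definition is_eigenprojection {R : fieldType} {n : nat} (A B : 'M[R]_n) : Prop :=
  exists nu, is_index A nu /\ B * B = B /\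
    (range B == nullsp (A ^+ nu))%MS /\ (nullsp B == range (A ^+ nu))%MS.

(* Main.v *)
Require Import Defs.
From HB Require Import structures.
From mathcomp Require Import all_boot all_order all_algebra.
From mathcomp Require Import zify.
Set Implicit Arguments. Unset Strict Implicit. Unset Printing Implicit Defensive.
Import Order.TTheory GRing.Theory Num.Theory.
Local Open Scope ring_scope.

Lemma rank_idem (R : fieldType) n (B : 'M[R]_n) : B *m B = B -> \tr B = (\rank B)%:R.
Proof.
move=> hB; set C := col_base B; set D := row_base B.
have hCD : C *m D = B := mulmx_base B.
have e1 : C *m (D *m C) *m D = C *m 1%:M *m D.
  rewrite mulmx1 hCD; transitivity (C *m D *m (C *m D)); first by rewrite !mulmxA.
  by rewrite hCD hB.
have e2 := row_free_inj (row_base_free B) e1.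
have hfree : row_free C^T.
  by rewrite /row_free mxrank_tr; have := col_base_full B.
have hDC : D *m C = 1%:M.
  apply: trmx_inj; apply: (row_free_inj hfree).
  rewrite /= -!trmx_mul; congr (_^T); exact: e2.
by rewrite -{1}hCD mxtrace_mulC hDC mxtrace1.
Qed.

Lemma sumsq0 (R : realFieldType) n (y : 'rV[R]_n) : y *m y^T = 0 -> y = 0.
Proof.
move=> h; have := congr1 (fun M : 'M_1 => M 0 0) h; rewrite !mxE /= => h2.
apply/rowP => j; rewrite mxE.
have hge : forall i : 'I_n, true -> 0 <= y 0 i * y^T i 0.
  by move=> i _; rewrite mxE -expr2 sqr_ge0.
have := psumr_eq0P hge h2 (i:=j) isT.
by rewrite mxE => /eqP; rewrite mulf_eq0 orbb => /eqP.
Qed.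

Lemma LA_main (R : realFieldType) n (L J P : 'M[R]_n) (d : nat) :
  L *m J = 0 -> J = 1%:M - L *m P -> \tr J = d%:R -> (0 < d)%N ->
  (L + J^T) \in unitmx /\
  (\rank L = (n - \rank J)%N /\ (n - \rank J)%N = (n - d)%N) /\
  ((nullsp L == range J)%MS /\ (range L == nullsp J)%MS) /\
  (range L :&: range J == (0 : 'M_n))%MS /\
  is_index L 1 /\ is_eigenprojection L J.
Proof.
move=> hLJ hJ htr hd.
set A := L^T; set B := J^T.
have hBA : B *m A = 0 by rewrite /A /B -trmx_mul hLJ trmx0.
have hB : B = 1%:M - P^T *m A by rewrite /B hJ linearB /= trmx1 trmx_mul.
have hA : A = P^T *m (A *m A).
  apply/eqP; rewrite -subr_eq0; apply/eqP.
  by rewrite mulmxA -{1}(mul1mx A) -mulmxBl -hB hBA.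
have hrAA : \rank (A *m A) = \rank A.
  apply/eqP; rewrite eqn_leq mxrankM_maxl /=.
  by rewrite {1}hA mxrankM_maxr.
have s1 : (kermx A <= kermx (A *m A))%MS by rewrite sub_kermx mulmxA mulmx_ker mul0mx.
have e1 : (kermx A == kermx (A *m A))%MS.
  by rewrite -(mxrank_leqif_eq s1).2 !mxrank_ker hrAA eqxx.
have hAB : A *m B = 0.
  set Z := 1%:M - A *m P^T.
  have hZ : A *m B = Z *m A by rewrite hB mulmxBr mulmxBl mulmx1 mul1mx mulmxA.
  have : (Z <= kermx A)%MS.
    have s2 : (kermx (A *m A) <= kermx A)%MS by case/andP: e1.
    apply: submx_trans s2.
    by rewrite sub_kermx mulmxA -hZ -mulmxA hBA mulmx0.
  by rewrite sub_kermx hZ => /eqP.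
have hBB : B *m B = B by rewrite {1}hB mulmxBl mul1mx -mulmxA hAB mulmx0 subr0.
have sub1 : (B <= kermx A)%MS by rewrite sub_kermx hBA.
have sub2 : (A <= kermx B)%MS by rewrite sub_kermx hAB.
have sub3 : (kermx B <= A)%MS.
  have -> : kermx B = kermx B *m P^T *m A.
    rewrite -mulmxA -[LHS]mulmx1.
    have -> : (1%:M : 'M_n) = B + P^T *m A by rewrite hB subrK.
    by rewrite mulmxDr mulmx_ker add0r.
  exact: submxMl.
have eAB : (A == kermx B)%MS by apply/andP.
have rB1 : (\rank B <= n - \rank A)%N by rewrite -mxrank_ker mxrankS.
have rB2 : (n <= \rank B + \rank A)%N.
  rewrite -{1}(mxrank1 R n).
  have -> : (1%:M : 'M_n) = B + P^T *m A by rewrite hB subrK.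
  apply: leq_trans (mxrank_add _ _) _; rewrite leq_add2l; exact: mxrankM_maxr.
have rAn : (\rank A <= n)%N by apply: rank_leq_col.
have rBA : \rank B = (n - \rank A)%N by apply/eqP; rewrite eqn_leq rB1 /= leq_subLR addnC.
have eBA : (kermx A == B)%MS.
  apply/andP; split; last exact: sub1.
  have := (mxrank_leqif_eq sub1).2; rewrite mxrank_ker -rBA eqxx => /esym/andP [].
  by [].
have rJd : \rank J = d.
  apply/eqP; rewrite -(eqr_nat R) -htr -mxrank_tr -/B -mxtrace_tr -/B rank_idem //.
have rL : \rank L = (n - \rank J)%N.
  by rewrite -(mxrank_tr L) -/A -(mxrank_tr J) -/B rBA subKn.
have hcap : (A :&: B == (0 : 'M_n))%MS.
  apply/andP; split; last exact: sub0mx.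
  rewrite submx0.
  set U := (A :&: B)%MS.
  have hU : U *m B = 0.
    apply/sub_kermxP; apply: submx_trans (capmxSl _ _) _; exact: sub2.
  have := capmxSr A B; rewrite -/U => /submxP [D hD].
  by rewrite hD -hBB mulmxA -hD hU.
have hLL : \rank (L ^+ 2) = \rank (L ^+ 1).
  by rewrite expr2 expr1 -mulmxE -mxrank_tr trmx_mul hrAA mxrank_tr.
have hidx : is_index L 1.
  split => // j; rewrite ltnS leqn0 => /eqP -> /=; rewrite expr1 expr0.
  rewrite mxrank1 rL rJd => /eqP; rewrite -{2}(subn0 n) eqn_sub2lE ?leqnn //; last first.
    by rewrite -rJd rank_leq_col.
  by move/eqP => d0; rewrite d0 in hd.
split.
  rewrite -row_free_unit; apply: inj_row_free => v hv.
  have hL : L = A^T by rewrite trmxK.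
  set y := v *m A^T.
  have hy : y = - (v *m B).
    by apply/eqP; rewrite -addr_eq0 /y -mulmxDr -hL hv.
  have y0 : y = 0.
    apply: sumsq0.
    by rewrite {2}hy linearN /= trmx_mul /y mulmxN -!mulmxA (mulmxA A^T) -trmx_mul hBA trmx0 mul0mx mulmx0 oppr0.
  have vB : v *m B = 0 by apply: oppr_inj; rewrite -hy y0 oppr0.
  have : (v <= A)%MS by apply: submx_trans sub3; rewrite sub_kermx vB.
  case/submxP => x hx.
  have hAv : A *m v^T = y^T by rewrite /y trmx_mul trmxK.
  by apply: sumsq0; rewrite {1}hx -mulmxA hAv y0 trmx0 mulmx0.
split; first by rewrite rL rJd.
split; first by (rewrite /nullsp /range; split; [exact: eBA | exact: eAB]).
split; first exact: hcap.
split; first exact: hidx.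
exists 1%N; split; first exact: hidx.
split; first by apply: trmx_inj; rewrite -mulmxE trmx_mul -/B hBB.
rewrite /nullsp /range expr1; split; apply/andP; [case/andP: eBA | case/andP: eAB] => h1 h2; split; done.
Qed.

Lemma fix_iter (T : finType) (f : T -> T) x y :
  fconnect f x y -> f y = y -> iter #|T| f x = y.
Proof.
move=> cxy fy.
have lt := findex_max cxy.
have le : (findex f x y <= #|T|)%N.
  apply: leq_trans (ltnW lt) _; exact: max_card.
by rewrite -(subnK le) iterD iter_findex // iter_fix.
Qed.

Lemma iter_same (T : finType) (f g : T -> T) (i : T) :
  (forall x, x != i -> g x = f x) ->
  forall x, (forall m, iter m f x != i) -> forall m, iter m g x = iter m f x.
Proof.
move=> hgf x hx; elim=> // m IH.
by rewrite !iterS IH hgf.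
Qed.

Lemma iter_reach (T : finType) (f g : T -> T) (i : T) :
  (forall x, x != i -> g x = f x) ->
  forall m x, iter m f x = i -> fconnect g x i.
Proof.
move=> hgf; elim=> [|m IH] x; first by move=> /= ->; exact: connect0.
rewrite iterSr => hm.
have [-> | xi] := eqVneq x i; first exact: connect0.
apply: connect_trans (fconnect1 g x) _.
by rewrite hgf //; apply: IH.
Qed.

Section Comb.
Variables (R : realFieldType) (n : nat) (w : 'M[R]_n).
Hypothesis hloop : forall i, w i i = 0.
Hypothesis hpos : forall i j, 0 <= w i j.

Local Notation arcs := {set 'I_n * 'I_n}.

Definition par (F : arcs) (v : 'I_n) : 'I_n := odflt v [pick u | (v, u) \in F].
Definition isroot (F : arcs) v := (outdeg F v == 0)%N.
Definition rt (F : arcs) v := iter n (par F) v.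
Definition good (F : arcs) :=
  [&& is_subgraph w F, [forall v, (outdeg F v <= 1)%N] & [forall v, isroot F (rt F v)]].

Lemma sub_pos (F : arcs) a b : is_subgraph w F -> (a, b) \in F -> 0 < w a b.
Proof. by move=> /forallP /(_ (a, b)) /implyP H /H. Qed.

Lemma sub_noloop (F : arcs) v : is_subgraph w F -> (v, v) \notin F.
Proof. by move=> hs; apply/negP => /(sub_pos hs); rewrite hloop ltxx. Qed.

Lemma isrootP (F : arcs) v : reflect (forall u, (v, u) \notin F) (isroot F v).
Proof.
rewrite /isroot /outdeg cards_eq0; apply: (iffP eqP) => [h u|h].
  apply/negP => hu; have : u \in [set j | (v, j) \in F] by rewrite inE.
  by rewrite h inE.
by apply/setP => u; rewrite !inE; apply/negbTE.
Qed.

Lemma par_root (F : arcs) v : isroot F v -> par F v = v.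
Proof.
move/isrootP => h; rewrite /par; case: pickP => //= u hu.
by have := h u; rewrite hu.
Qed.

Lemma par_nonroot (F : arcs) v : ~~ isroot F v -> (v, par F v) \in F.
Proof.
move=> h; rewrite /par; case: pickP => //= hn; case/negP: h; apply/isrootP => u.
by rewrite hn.
Qed.

Lemma par_arc (F : arcs) v u : (outdeg F v <= 1)%N -> (v, u) \in F -> par F v = u.
Proof.
move=> hd hu.
have hnr : ~~ isroot F v by apply/negP => /isrootP /(_ u); rewrite hu.
have hp := par_nonroot hnr.
move/card_le1_eqP: hd => /(_ (par F v) u).
by rewrite !inE => /(_ hp hu).
Qed.

Lemma iter_root (F : arcs) m z : isroot F (iter m (par F) z) -> rt F z = iter m (par F) z.
Proof.
move=> h; have := @fix_iter _ (par F) z (iter m (par F) z); rewrite card_ord; apply.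
  exact: fconnect_iter.
exact: par_root.
Qed.

Lemma rt_of_root (F : arcs) v : isroot F v -> rt F v = v.
Proof. by move=> h; rewrite (@iter_root F 0). Qed.

Lemma goodP (F : arcs) : good F ->
  [/\ is_subgraph w F, forall v, (outdeg F v <= 1)%N & forall v, isroot F (rt F v)].
Proof. by case/and3P => h1 /forallP h2 /forallP h3. Qed.

Lemma rt_root (F : arcs) v : good F -> isroot F (rt F v).
Proof. by case/goodP. Qed.

Lemma rt_idem (F : arcs) v : good F -> rt F (rt F v) = rt F v.
Proof. by move=> g; rewrite rt_of_root // rt_root. Qed.

Lemma rt_par (F : arcs) v : good F -> rt F (par F v) = rt F v.
Proof.
move=> g; rewrite /rt -iterSr iterS -/(rt F v) par_root //; exact: rt_root.
Qed.

Lemma rt_arc (F : arcs) a b : good F -> (a, b) \in F -> rt F b = rt F a.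
Proof. by move=> g hab; case/goodP: (g) => _ h1 _; rewrite -(par_arc (h1 a) hab) rt_par. Qed.

Lemma weak_sym (F : arcs) : symmetric (weak_rel F).
Proof. by move=> x y; rewrite /weak_rel orbC. Qed.

Lemma fconn_weak (F : arcs) x y : fconnect (par F) x y -> connect (weak_rel F) x y.
Proof.
apply: connect_sub => a b /eqP <-.
have [h|h] := boolP (isroot F a); first by rewrite par_root //; exact: connect0.
by apply: connect1; rewrite /weak_rel par_nonroot.
Qed.

Lemma wcomp_good (F : arcs) x : good F -> wcomp F x = [set y | rt F y == rt F x].
Proof.
move=> g; apply/setP => y; rewrite !inE; apply/idP/idP.
  move=> cxy.
  have cl : closed (weak_rel F) [pred z | rt F z == rt F x].
    move=> a b; rewrite /weak_rel => /orP [] hab; rewrite !inE /=.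
      by rewrite (rt_arc g hab).
    by rewrite (rt_arc g hab).
  by have := closed_connect cl cxy; rewrite !inE eqxx => <-.
move/eqP => e.
have c1 : connect (weak_rel F) x (rt F x) by apply: fconn_weak; exact: fconnect_iter.
have c2 : connect (weak_rel F) y (rt F y) by apply: fconn_weak; exact: fconnect_iter.
apply: connect_trans c1 _; rewrite -e (sym_connect_sym (@weak_sym F)); exact: c2.
Qed.


Lemma inforest_good (F : arcs) : is_inforest w F = good F.
Proof.
apply/idP/idP.
  case/andP => hs /forallP hc.
  have hd : forall v, (outdeg F v <= 1)%N.
    move=> v; case/existsP: (hc v) => r /and3P [_ /eqP hr /forallP hy].
    have [-> | vr] := eqVneq v r; first by rewrite hr.
    have := hy v; rewrite /wcomp inE connect0 vr /= => /eqP ->; done.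
  apply/and3P; split => //; first by apply/forallP.
  apply/forallP => v.
  set a := [pred z | isroot F (rt F z)].
  have cl : closed (weak_rel F) a.
    have arc : forall x y, (x, y) \in F -> (x \in a) = (y \in a).
      move=> x y hxy; rewrite !inE /=.
      have py := par_arc (hd x) hxy.
      apply/idP/idP => h.
        by rewrite -py /rt -iterSr iterS -/(rt F x) par_root // -/(rt F x) h.
      rewrite (@iter_root F n.+1 x); first by rewrite iterSr py.
      by rewrite iterSr py.
    move=> x y; rewrite /weak_rel => /orP [] h; first exact: arc.
    by rewrite (arc _ _ h).
  case/existsP: (hc v) => r /and3P [hr /eqP hr0 _].
  rewrite /wcomp inE in hr.
  have := closed_connect cl hr; rewrite !inE /= => ->.
  by rewrite rt_of_root /isroot hr0.
move=> g; case/goodP: (g) => hs hd hr.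
apply/andP; split => //; apply/forallP => x.
rewrite wcomp_good //; apply/existsP; exists (rt F x).
rewrite inE rt_idem // eqxx /=; apply/andP; split; first exact: hr.
apply/forallP => y; apply/implyP; rewrite inE => /eqP hy; apply/implyP => hyx.
have : ~~ isroot F y by apply: contra hyx => /rt_of_root <-; rewrite hy.
by rewrite /isroot; have := hd y; case: (outdeg F y) => [|[|]].
Qed.

Lemma rooted_good (F : arcs) i j : good F -> rooted_at F i j = (rt F i == j).
Proof.
move=> g; rewrite /rooted_at wcomp_good // inE.
apply/idP/idP.
  by case/andP => /eqP <- h; rewrite rt_of_root.
move/eqP => <-; rewrite rt_idem // eqxx /=; exact: rt_root.
Qed.

Definition roots (F : arcs) := [set v | isroot F v].

Lemma ntrees_good (F : arcs) : good F -> ntrees F = #|roots F|.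
Proof.
move=> g; rewrite /ntrees.
have -> : [set wcomp F x | x : 'I_n] =
    (fun r => [set y | rt F y == r]) @: (rt F @: [set: 'I_n]).
  apply/setP => S; apply/imsetP/imsetP => [[x _ ->]|[r /imsetP [x _ ->] ->]].
    by exists (rt F x); [apply/imsetP; exists x | rewrite wcomp_good].
  by exists x; rewrite ?wcomp_good.
rewrite card_in_imset.
  apply: eq_card => v; rewrite /roots inE; apply/imsetP/idP.
    by case=> x _ ->; exact: rt_root.
  by move=> h; exists v; rewrite ?inE // rt_of_root.
move=> r1 r2 /imsetP [a _ ->] /imsetP [b _ ->] e.
have : rt F a \in [set y | rt F y == rt F a] by rewrite inE rt_idem.
by rewrite e inE rt_idem // => /eqP.
Qed.

Lemma card_good (F : arcs) : good F -> (#|F| + #|roots F| = n)%N.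
Proof.
move=> g; case/goodP: (g) => _ hd _.
have e1 : #|F| = (\sum_v outdeg F v)%N.
  rewrite -sum1_card.
  transitivity (\sum_v \sum_(u | (v, u) \in F) 1)%N; last first.
    by apply: eq_bigr => v _; rewrite sum1_card /outdeg cardsE.
  rewrite [RHS]pair_big_dep /=; apply: eq_bigl => -[a b] //.
have e2 : #|roots F| = (\sum_v (isroot F v : nat))%N.
  by rewrite -sum1_card big_mkcond /=; apply: eq_bigr => v _; rewrite inE; case: (isroot F v).
rewrite e1 e2 -big_split /= -[RHS]card_ord -sum1_card; apply: eq_bigr => v _.
by rewrite /isroot; have := hd v; case: (outdeg F v) => [|[|]].
Qed.


Lemma rt_spec (F : arcs) v t : fconnect (par F) v t -> isroot F t -> rt F v = t.
Proof.
move=> c h; have := @fix_iter _ (par F) v t; rewrite card_ord; apply => //.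
exact: par_root.
Qed.

Lemma avoid (F : arcs) i x : isroot F i -> rt F x != i -> forall m, iter m (par F) x != i.
Proof.
move=> hi hx m; apply: contra hx => /eqP hm; apply/eqP.
by rewrite (@iter_root F m) ?hm.
Qed.

Lemma par_add (F : arcs) i p v : isroot F i ->
  par ((i, p) |: F) v = if v == i then p else par F v.
Proof.
move=> /isrootP hi; rewrite /par; case: eqP => [->|/eqP vi].
  case: pickP => [u /= | /(_ p)]; last by rewrite in_setU1 eqxx.
  by rewrite in_setU1 xpair_eqE eqxx /= (negbTE (hi u)) orbF => /eqP.
congr odflt; apply: eq_pick => u /=; rewrite in_setU1 xpair_eqE (negbTE vi) //.
Qed.

Lemma outdeg_add (F : arcs) i p v : isroot F i ->
  outdeg ((i, p) |: F) v = if v == i then 1%N else outdeg F v.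
Proof.
move=> hi; rewrite /outdeg; case: eqP => [->|/eqP vi].
  rewrite -(cards1 p); apply: eq_card => u; rewrite !inE xpair_eqE eqxx /=.
  by move/isrootP: hi => /(_ u) /negbTE ->; rewrite orbF.
by apply: eq_card => u; rewrite !inE xpair_eqE (negbTE vi).
Qed.

Lemma isroot_add (F : arcs) i p v : isroot F i ->
  isroot ((i, p) |: F) v = (v != i) && isroot F v.
Proof. by move=> hi; rewrite /isroot outdeg_add //; case: (v =P i). Qed.

Lemma rt_add (F : arcs) i p v : good F -> isroot F i -> rt F p != i ->
  rt ((i, p) |: F) v = if rt F v == i then rt F p else rt F v.
Proof.
move=> g hi hp; set G := (i, p) |: F.
have hpar : forall x, x != i -> par G x = par F x.
  by move=> x xi; rewrite par_add // (negbTE xi).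
have hpi : par G i = p by rewrite par_add // eqxx.
case: eqP => hv.
  apply: rt_spec.
    apply: connect_trans (_ : fconnect (par G) v i) _.
      exact: (@iter_reach _ (par F) (par G) i hpar n v).
    apply: connect_trans (fconnect1 _ i) _; rewrite hpi.
    have := iter_same hpar (avoid hi hp) n; rewrite -/(rt F p) => <-.
    exact: fconnect_iter.
  by rewrite isroot_add // hp rt_root.
have := iter_same hpar (@avoid F i v hi (introN eqP hv)) n; rewrite -/(rt F v) => <-.
by [].
Qed.

Lemma good_add (F : arcs) i p : good F -> isroot F i -> 0 < w i p -> rt F p != i ->
  good ((i, p) |: F).
Proof.
move=> g hi hw hp; case/goodP: (g) => hs hd hr.
apply/and3P; split.
- apply/forallP => -[a b]; apply/implyP; rewrite in_setU1 => /orP [/eqP [-> ->] //|].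
  exact: sub_pos.
- by apply/forallP => v; rewrite outdeg_add //; case: eqP.
- apply/forallP => v; rewrite rt_add // isroot_add //.
  by case: (rt F v =P i) => [_|/eqP h]; rewrite ?hp ?h (rt_root _ g).
Qed.

Lemma notin_add (F : arcs) i p : isroot F i -> (i, p) \notin F.
Proof. by move/isrootP. Qed.

Lemma card_add (F : arcs) i p : isroot F i -> #|(i, p) |: F| = #|F|.+1.
Proof. by move=> hi; rewrite cardsU1 notin_add. Qed.

Lemma weight_add (F : arcs) i p : isroot F i ->
  weight w ((i, p) |: F) = w i p * weight w F.
Proof. by move=> hi; rewrite /weight big_setU1 ?notin_add. Qed.

Lemma del_facts (G : arcs) i : good G -> ~~ isroot G i ->
  let p := par G i in let F := G :\ (i, p) in
  [/\ G = (i, p) |: F, good F, isroot F i, rt F p != i & 0 < w i p].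
Proof.
move=> g hni p F; case/goodP: (g) => hs hd hr.
have hin : (i, p) \in G by exact: par_nonroot.
have hG : G = (i, p) |: F by rewrite setD1K.
have hFi : isroot F i.
  apply/isrootP => u; rewrite in_setD1 xpair_eqE eqxx /=; apply/negP => /andP [hu hiu].
  have := par_arc (hd i) hiu; rewrite -/p => hpu.
  by rewrite hpu eqxx in hu.
have hpar : forall x, x != i -> par F x = par G x.
  move=> x xi; rewrite /par; congr odflt; apply: eq_pick => u /=.
  by rewrite in_setD1 xpair_eqE (negbTE xi).
have hFG : forall x, isroot G x -> isroot F x.
  move=> x; rewrite /isroot -!leqn0 => h; apply: leq_trans h.
  by apply: subset_leq_card; apply/subsetP => u; rewrite !inE => /andP [].
have hrt : forall v, ~~ fconnect (par G) v i -> rt F v = rt G v.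
  move=> v hv; apply: (iter_same hpar) => m.
  by apply: contra hv => /eqP <-; exact: fconnect_iter.
have hrtn : forall v, ~~ fconnect (par G) v i -> rt G v != i.
  move=> v hv; apply: contra hv => /eqP <-; exact: fconnect_iter.
have gF : good F.
  apply/and3P; split.
  - apply/forallP => a; apply/implyP => ha; have := forallP hs a; move/implyP; apply.
    by move: ha; rewrite in_setD1 => /andP [].
  - apply/forallP => v; apply: leq_trans (hd v).
    by apply: subset_leq_card; apply/subsetP => u; rewrite !inE => /andP [].
  - apply/forallP => v; have [c|c] := boolP (fconnect (par G) v i).
      have e := iter_findex c.
      have c' := @iter_reach _ (par G) (par F) i hpar _ v e.
      by rewrite (rt_spec c' hFi).
    by rewrite hrt //; apply: hFG.
split => //.
  have [c|c] := boolP (fconnect (par G) p i); last by rewrite hrt // hrtn.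
  exfalso; move/negP: hni; apply.
  have e := iter_findex c; set k := findex (par G) p i in e.
  have cyc : iter k.+1 (par G) i = i by rewrite iterSr -/p.
  have cycm : forall m, iter (m * k.+1) (par G) i = i.
    by elim=> [|m IH] //; rewrite mulSn iterD IH cyc.
  have big : iter (n * k.+1) (par G) i = rt G i.
    have le : (n <= n * k.+1)%N by rewrite leq_pmulr.
    rewrite -(subnK le) iterD -/(rt G i) iter_fix //; apply: par_root; exact: rt_root.
  have e2 : rt G i = i by rewrite -big cycm.
  by rewrite -{1}e2; apply: rt_root.
exact: sub_pos hin.
Qed.


Lemma decomp i k (f : arcs -> R) :
  \sum_(G | good G && (#|G| == k.+1) && ~~ isroot G i) f G =
  \sum_(F | good F && (#|F| == k) && isroot F i)
     \sum_(p | (0 < w i p) && (rt F p != i)) f ((i, p) |: F).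
Proof.
rewrite pair_big_dep /=.
rewrite (reindex_onto (fun x : arcs * 'I_n => (i, x.2) |: x.1)
   (fun G => (G :\ (i, par G i), par G i))) /=; last first.
  move=> G /andP [/andP [g _] hnr]; have := del_facts g hnr => /= -[hG _ _ _ _].
  by rewrite -hG.
apply: eq_bigl => -[F p] /=; apply/idP/idP.
  case/andP => /andP [/andP [g hc] hnr] /eqP [hF hp].
  have := del_facts g hnr => /= -[hG gF hFi hrt hw].
  rewrite hp in hF; rewrite hp hF in gF hFi hrt hw.
  rewrite gF hFi hrt hw /= andbT.
  by rewrite andbT; rewrite card_add // eqSS in hc.
case/andP => /andP [/andP [gF /eqP hc] hFi] /andP [hw hrt].
rewrite good_add // card_add // hc eqxx isroot_add // eqxx /=.
by rewrite par_add // eqxx setU1K ?notin_add.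
Qed.

Lemma restrict (F : arcs) i (h : 'I_n -> R) :
  (forall m, rt F m = i -> h m = 0) ->
  \sum_m w i m * h m = \sum_(p | (0 < w i p) && (rt F p != i)) w i p * h p.
Proof.
move=> hh; rewrite [RHS]big_mkcond; apply: eq_bigr => m _.
case: ifP => //; case/nandP.
  by rewrite lt_def hpos andbT negbK => /eqP ->; rewrite mul0r.
by rewrite negbK => /eqP /hh ->; rewrite mulr0.
Qed.

Lemma antisym (P : pred 'I_n) (c a : 'I_n -> R) :
  \sum_(p | P p) \sum_(m | P m) c p * c m * (a p - a m) = 0.
Proof.
transitivity (\sum_(p | P p) \sum_(m | P m) c p * c m * a p -
              \sum_(p | P p) \sum_(m | P m) c p * c m * a m).
  rewrite -sumrB; apply: eq_bigr => p _; rewrite -sumrB; apply: eq_bigr => m _.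
  by rewrite mulrBr.
rewrite [X in _ - X]exchange_big /=; apply/eqP; rewrite subr_eq0; apply/eqP.
by apply: eq_bigr => p _; apply: eq_bigr => m _; rewrite (mulrC (c p)).
Qed.

Lemma Q_good k i j : Qmat w k i j =
  \sum_(F | good F && (#|F| == k)) weight w F * (rt F i == j)%:R.
Proof.
rewrite mxE big_mkcond [RHS]big_mkcond; apply: eq_bigr => F _.
rewrite inforest_good; case g: (good F) => //=.
rewrite rooted_good //; case: (#|F| == k) => /=; last by [].
by case: (rt F i == j); rewrite ?mulr1 ?mulr0.
Qed.

Lemma sigma_good k : sigma w k = \sum_(F | good F && (#|F| == k)) weight w F.
Proof. by apply: eq_bigl => F; rewrite inforest_good. Qed.

Lemma lap_row i (x : 'I_n -> R) :
  \sum_m laplacian w i m * x m = \sum_m w i m * (x i - x m).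
Proof.
rewrite (bigD1 i) //= [RHS](bigD1 i) //= subrr mulr0 add0r mxE eqxx.
rewrite mulr_suml -big_split /=; apply: eq_bigr => m hm.
by rewrite mxE eq_sym (negbTE hm) mulrBr mulNr.
Qed.


Lemma rec k i j :
  \sum_m laplacian w i m * Qmat w k m j = sigma w k.+1 * (i == j)%:R - Qmat w k.+1 i j.
Proof.
pose a := fun (F : arcs) v => ((rt F v == j)%:R : R).
pose D := fun (F : arcs) => \sum_m w i m * (a F i - a F m).
pose E := fun (G : arcs) => (i == j)%:R - a G i.
have L1 : \sum_m laplacian w i m * Qmat w k m j =
    \sum_(F | good F && (#|F| == k)) weight w F * D F.
  rewrite lap_row.
  under eq_bigr => m _ do rewrite !Q_good -sumrB mulr_sumr.
  rewrite exchange_big /=; apply: eq_bigr => F _.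
  rewrite /D mulr_sumr; apply: eq_bigr => m _.
  by rewrite -!mulrBr mulrCA.
have L2 : sigma w k.+1 * (i == j)%:R - Qmat w k.+1 i j =
    \sum_(G | good G && (#|G| == k.+1)) weight w G * E G.
  rewrite sigma_good Q_good mulr_suml -sumrB; apply: eq_bigr => G _.
  by rewrite /E mulrBr.
rewrite L1 L2.
rewrite (bigID (fun F => isroot F i)) [RHS](bigID (fun F => isroot F i)) /=.
have R0 : \sum_(G | good G && (#|G| == k.+1) && isroot G i) weight w G * E G = 0.
  by apply: big1 => G /andP [_ hr]; rewrite /E /a rt_of_root // subrr mulr0.
have L0 : \sum_(F | good F && (#|F| == k) && ~~ isroot F i) weight w F * D F = 0.
  case: k {L1 L2 R0} => [|k'].
    apply: big_pred0 => F; apply/negP => /andP [/andP [_ /eqP]] /cards0_eq -> /negP; apply.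
    by apply/isrootP => u; rewrite in_set0.
  rewrite decomp; apply: big1 => F /andP [/andP [gF _] hFi].
  transitivity (weight w F * \sum_(p | (0 < w i p) && (rt F p != i))
     \sum_(m | (0 < w i m) && (rt F m != i)) w i p * w i m * (a F p - a F m)).
    rewrite mulr_sumr; apply: eq_bigr => p /andP [hw hp].
    rewrite weight_add // /D (@restrict F); last first.
      move=> m hm; rewrite /a !rt_add // hm eqxx (rt_of_root hFi) eqxx.
      by rewrite subrr.
    rewrite -mulrA mulrCA; congr (_ * _); rewrite mulr_sumr.
    apply: eq_bigr => m /andP [_ hm].
    rewrite /a !rt_add // (negbTE hm) (rt_of_root hFi) eqxx.
    by rewrite mulrA.
  by rewrite antisym mulr0.
rewrite R0 L0 addr0 add0r decomp.
apply: eq_bigr => F /andP [/andP [gF _] hFi].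
rewrite /D (@restrict F); last first.
  by move=> m hm; rewrite /a hm (rt_of_root hFi) subrr.
rewrite mulr_sumr; apply: eq_bigr => p /andP [hw hp].
rewrite weight_add // /E /a rt_add // (rt_of_root hFi) eqxx.
by rewrite mulrCA mulrA.
Qed.


Lemma good0 : good set0.
Proof.
apply/and3P; split.
- by apply/forallP => a; rewrite in_set0.
- by apply/forallP => v; rewrite /outdeg leq_eqVlt; apply/orP; right; rewrite ltnS leqn0 cards_eq0;
    apply/eqP/setP => u; rewrite !inE.
- by apply/forallP => v; apply/isrootP => u; rewrite in_set0.
Qed.

Lemma root0 v : isroot set0 v.
Proof. by apply/isrootP => u; rewrite in_set0. Qed.

Lemma good_card0 (F : arcs) : (good F && (#|F| == 0%N)) = (F == set0).
Proof.
apply/idP/idP; first by case/andP => _; rewrite cards_eq0.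
by move/eqP ->; rewrite good0 cards0.
Qed.

Lemma Q0 : Qmat w 0 = (sigma w 0)%:M.
Proof.
apply/matrixP => i j; rewrite Q_good sigma_good mxE.
rewrite (big_pred1 set0) ?(big_pred1 set0) //; last by move=> F; rewrite good_card0.
  by rewrite rt_of_root ?root0 // mulr_natr.
by move=> F; rewrite good_card0.
Qed.

Lemma trQ K d : (forall F : arcs, good F -> #|F| = K -> #|roots F| = d) ->
  \tr (Qmat w K) = d%:R * sigma w K.
Proof.
move=> hd; rewrite /mxtrace.
under eq_bigr => v _ do rewrite Q_good.
rewrite exchange_big /= sigma_good mulr_sumr; apply: eq_bigr => F /andP [g /eqP hc].
rewrite -mulr_sumr mulrC; congr (_ * _).
rewrite -(hd F g hc) -sum1_card natr_sum [RHS]big_mkcond /=; apply: eq_bigr => v _.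
rewrite /roots inE; have [hr|hr] := boolP (isroot F v).
  by rewrite rt_of_root // eqxx.
case: eqP => // he; case/negP: hr; rewrite -he; exact: rt_root.
Qed.

Lemma bigmin_le (I : finType) (P : pred I) (g : I -> nat) m i :
  P i -> (\big[minn/m]_(j | P j) g j <= g i)%N.
Proof.
move=> hi; have : i \in index_enum I by rewrite mem_index_enum.
elim: (index_enum I) => // x r IH; rewrite inE big_cons.
case/orP => [/eqP <-|hr]; first by rewrite hi geq_minl.
by case: ifP => _; [apply: leq_trans (geq_minr _ _) (IH hr)| apply: IH].
Qed.

Lemma bigmin_ex (I : finType) (P : pred I) (g : I -> nat) m :
  (\big[minn/m]_(j | P j) g j == m) || [exists j, P j && (\big[minn/m]_(j | P j) g j == g j)].
Proof.
elim/big_ind: _ => //.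
- by rewrite eqxx.
- by move=> x y hx hy; case: (leqP x y).
- by move=> j hj; apply/orP; right; apply/existsP; exists j; rewrite hj eqxx.
Qed.

Lemma Qrec m :
  Qmat w m = (sigma w m)%:M - laplacian w *m (if m is k.+1 then Qmat w k else 0).
Proof.
case: m => [|k]; first by rewrite mulmx0 subr0 Q0.
apply/matrixP => i j.
have -> : ((sigma w k.+1)%:M - laplacian w *m Qmat w k) i j =
    sigma w k.+1 *+ (i == j) - \sum_m laplacian w i m * Qmat w k m j by rewrite !mxE.
by rewrite rec mulr_natr opprB addrC subrK.
Qed.

Lemma main (hn : (1 < n)%N) :
  let L := laplacian w in
  let J := Jtilde w in
  let d := inforest_dim w in
  let Z : 'M[R]_n := 0 in
  (L + J^T) \in unitmx /\
  (\rank L = (n - \rank J)%N /\ (n - \rank J)%N = (n - d)%N) /\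
  ((nullsp L == range J)%MS /\ (range L == nullsp J)%MS) /\
  (range L :&: range J == Z)%MS /\
  is_index L 1 /\ is_eigenprojection L J.
Proof.
move=> L J d Z.
have hex : exists F, good F /\ #|roots F| = d.
  have := bigmin_ex (fun F => is_inforest w F) (fun F => ntrees F) n.
  rewrite -/(inforest_dim w) -/d => /orP [/eqP hd|/existsP [F /andP [hF /eqP hd]]].
    exists set0; split; first exact: good0.
    have -> : roots set0 = setT by apply/setP => v; rewrite /roots !inE root0.
    by rewrite cardsT card_ord.
  rewrite inforest_good in hF; exists F; split => //.
  by rewrite hd ntrees_good.
have hle : forall F, good F -> (d <= #|roots F|)%N.
  move=> F g; rewrite -ntrees_good //; apply: bigmin_le; by rewrite inforest_good.
case: hex => Fs [gFs hFs].
have hdn : (d <= n)%N.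
  by rewrite -hFs (leq_trans (leq_addl #|Fs| _)) // (card_good gFs).
have hdpos : (0 < d)%N.
  rewrite -hFs card_gt0; apply/set0Pn.
  exists (rt Fs (Ordinal (ltnW hn))); rewrite /roots inE; exact: rt_root.
set K := (n - d)%N.
have hKc : forall F : arcs, good F -> #|F| = K -> #|roots F| = d.
  move=> F g hc; have := card_good g; rewrite hc /K => h; lia.
have hnoK : forall F : arcs, good F -> #|F| != K.+1.
  move=> F g; have := card_good g; have := hle F g; rewrite /K => h1 h2.
  apply/eqP => h3; lia.
have hQ1 : Qmat w K.+1 = 0.
  apply/matrixP => i j; rewrite Q_good mxE; apply: big_pred0 => F.
  by apply/negP => /andP [g /eqP hc]; move: (hnoK F g); rewrite hc eqxx.
have hs1 : sigma w K.+1 = 0.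
  rewrite sigma_good; apply: big_pred0 => F.
  by apply/negP => /andP [g /eqP hc]; move: (hnoK F g); rewrite hc eqxx.
have hwge : forall F : arcs, 0 <= weight w F.
  by move=> F; apply: prodr_ge0 => a _; exact: hpos.
have hsig : 0 < sigma w K.
  rewrite sigma_good (bigD1 Fs) /=; last first.
    rewrite gFs /K /=; have := card_good gFs; rewrite hFs => h.
    by rewrite -(eqn_add2r d) subnK // h.
  apply: ltr_wpDr; first by apply: sumr_ge0 => F _; exact: hwge.
  apply: prodr_gt0 => -[a b] hab; apply: sub_pos hab.
  by case/goodP: gFs.
have hLQ : L *m Qmat w K = 0.
  apply/matrixP => i j; rewrite !mxE rec hs1 hQ1 mxE mul0r subr0 //.
pose Pm := if K is k.+1 then Qmat w k else 0.
have hQ : Qmat w K = (sigma w K)%:M - L *m Pm.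
  rewrite /Pm; exact: Qrec.
have hs0 : sigma w K != 0 by rewrite gt_eqF.
have hJ : J = (sigma w K)^-1 *: Qmat w K by [].
apply: (@LA_main R n L J ((sigma w K)^-1 *: Pm) d) => //.
- by rewrite hJ -scalemxAr hLQ scaler0.
- rewrite hJ {1}hQ scalerBr scale_scalar_mx mulVf // scalemxAr //.
- by rewrite hJ mxtraceZ (trQ hKc) mulrCA mulVf ?mulr1.
Qed.

End Comb.

Theorem proposition12 (R : realFieldType) (n : nat) (w : 'M[R]_n)
  (hn : (1 < n)%N)
  (hloop : forall i, w i i = 0)
  (hpos : forall i j, 0 <= w i j) :
  let L := laplacian w in
  let J := Jtilde w in
  let d := inforest_dim w in
  let Z : 'M[R]_n := 0 in
  (* (i)   *) (L + J^T) \in unitmx /\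
  (* (ii)  *) (\rank L = (n - \rank J)%N /\ (n - \rank J)%N = (n - d)%N) /\
  (* (iii) *) ((nullsp L == range J)%MS /\ (range L == nullsp J)%MS) /\
  (* (iv)  *) (range L :&: range J == Z)%MS /\
  (* (v)   *) is_index L 1 /\
  (* (vi)  *) is_eigenprojection L J.
Proof. exact: (main hpos hn). Qed.
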